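(* Assume $p=0.5$ and $e_{-1}+e_{+1}<1$. Let $\mathcal F$ be a class of measurable classifiers $f:\mathcal X\to\{-1,+1\}$, and let $\tilde f^*\in\arg\min_{f\in\mathcal F}\mathbb E_{\tilde{\mathcal D}}[\mathbb 1_{\mathrm{peer}}(f(X),\tilde Y)]$. Then $\tilde f^*\in\arg\min_{f\in\mathcal F}R_{\mathcal D}(f)$, where $R_{\mathcal D}(f)=\mathbb P_{(X,Y)\sim\mathcal D}(f(X)\neq Y)$.
   Context: Let $\mathcal X\subseteq\mathbb R^d$ and let $(X,Y)$ be a random pair with distribution $\mathcal D$ on $\mathcal X\times\{-1,+1\}$, with $p:=\mathbb P(Y=+1)$. A noisy label $\tilde Y\in\{-1,+1\}$ is generated with noise rates $e_{+1}:=\mathbb P(\tilde Y=-1\mid Y=+1)$, $e_{-1}:=\mathbb P(\tilde Y=+1\mid Y=-1)$, where $\tilde Y$ is conditionally independent of $X$ given $Y$; $\tilde{\mathcal D}$ is the distribution of $(X,\tilde Y)$. The 0-1 loss is $\mathbb 1(a,b)=1$ if $a\neq b$ and $0$ otherwise. The expected 0-1 peer loss of $f$ on $\tilde{\mathcal D}$ is $$\mathbb E_{\tilde{\mathcal D}}[\mathbb 1_{\mathrm{peer}}(f(X),\tilde Y)]:=\mathbb E[\mathbb 1(f(X),\tilde Y)]-\mathbb E[\mathbb 1(f(X_1),\tilde Y_2)],$$ where $(X,\tilde Y),(X_1,\tilde Y_1),(X_2,\tilde Y_2)$ are i.i.d. draws from $\tilde{\mathcal D}$. *)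

(* Defs.v *)
From HB Require Import structures.
From mathcomp Require Import all_boot all_order all_algebra.
From mathcomp Require Import all_classical all_reals all_analysis.
Set Implicit Arguments. Unset Strict Implicit. Unset Printing Implicit Defensive.
Import Order.TTheory GRing.Theory Num.Theory.
Local Open Scope classical_set_scope.
Local Open Scope ring_scope.

(* Labels in {-1,+1} are encoded by bool: true <-> +1, false <-> -1.
   The primitive object is the joint law Q of the triple (X, Y, Ytilde) on
   T * (bool * bool); a point is w = (x, (y, ytilde)). *)

Section PeerLoss.
Context (R : realType) (d : measure_display) (T : measurableType d).
Implicit Types (Q : probability (T * (bool * bool))%type R).

Definition clean_pair (w : T * (bool * bool)) : (T * bool)%type := (w.1, w.2.1).
Definition noisy_pair (w : T * (bool * bool)) : (T * bool)%type := (w.1, w.2.2).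

Lemma measurable_clean_pair : measurable_fun setT clean_pair.
Proof.
apply/measurable_fun_pairP; split; first exact: measurable_fst.
exact: (measurableT_comp measurable_fst measurable_snd).
Qed.

Lemma measurable_noisy_pair : measurable_fun setT noisy_pair.
Proof.
apply/measurable_fun_pairP; split; first exact: measurable_fst.
exact: (measurableT_comp measurable_snd measurable_snd).
Qed.

HB.instance Definition _ := isMeasurableFun.Build _ _ _ _ clean_pair
  measurable_clean_pair.
HB.instance Definition _ := isMeasurableFun.Build _ _ _ _ noisy_pair
  measurable_noisy_pair.

Definition cleanD Q := distribution Q clean_pair.
Definition noisyD Q := distribution Q noisy_pair.

Definition prob_pos Q : \bar R := Q [set w | w.2.1 = true].

Definition e_plus Q : R :=
  fine (Q [set w | w.2.1 = true /\ w.2.2 = false]) / fine (Q [set w | w.2.1 = true]).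
Definition e_minus Q : R :=
  fine (Q [set w | w.2.1 = false /\ w.2.2 = true]) / fine (Q [set w | w.2.1 = false]).

(* Ytilde is conditionally independent of X given Y:
   P(X in A, Y = y, Ytilde = yt) P(Y = y) = P(X in A, Y = y) P(Y = y, Ytilde = yt) *)
Definition cond_indep Q : Prop :=
  forall (A : set T) (y yt : bool), measurable A ->
    (Q [set w | A w.1 /\ w.2.1 = y /\ w.2.2 = yt] * Q [set w | w.2.1 = y]
     = Q [set w | A w.1 /\ w.2.1 = y] * Q [set w | w.2.1 = y /\ w.2.2 = yt])%E.

Definition loss01 (a b : bool) : R := (a != b)%:R.

(* expected 0-1 peer loss on Dt:
   E[1(f X, Yt)] - E[1(f X1, Yt2)], (X1,Yt1),(X2,Yt2) i.i.d. ~ Dt *)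
Definition peer_risk Q (f : T -> bool) : \bar R :=
  (\int[noisyD Q]_z (loss01 (f z.1) z.2)%:E
   - \int[(noisyD Q \x noisyD Q)%E]_zz (loss01 (f zz.1.1) zz.2.2)%:E)%E.

Definition clean_risk Q (f : T -> bool) : \bar R :=
  cleanD Q [set z | f z.1 != z.2].

End PeerLoss.

(* Main.v *)
Require Import Defs.
From HB Require Import structures.
From mathcomp Require Import all_boot all_order all_algebra.
From mathcomp Require Import all_classical all_reals all_analysis.
From mathcomp Require Import ring lra.
Import Order.TTheory GRing.Theory Num.Theory.
Local Open Scope classical_set_scope.
Local Open Scope ring_scope.

Section S.
Context (R : realType) (d : measure_display) (T : measurableType d)
  (Q : probability (T * (bool * bool))%type R).

Lemma in_setb {U} (S : set U) (b : U -> bool) :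
  (forall z, S z <-> b z) -> forall z, (z \in S) = b z.
Proof. by move=> h z; apply/idP/idP => [/set_mem/h // | /h/mem_set //]. Qed.

Definition mu (S : set (T * (bool * bool))) : R := fine (Q S).

Lemma QE {S} : measurable S -> Q S = (mu S)%:E.
Proof. by move=> mS; rewrite /mu fineK // fin_num_measure. Qed.

Lemma mpreT {d'} {U : measurableType d'} {g : U -> bool} :
  measurable_fun setT g -> forall B, measurable [set w | B (g w)].
Proof. by move=> mg B; rewrite -[X in measurable X]setTI; exact: mg. Qed.

Lemma msplit S A B : measurable A -> measurable B ->
  (forall w, S w <-> A w \/ B w) -> (forall w, A w -> B w -> False) ->
  mu S = mu A + mu B.
Proof.
move=> mA mB hS hAB.
have -> : S = A `|` B by apply/seteqP; split => w /= /hS.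
rewrite /mu measureU //; last by apply/seteqP; split => w // [] /hAB H /H.
by rewrite fineD // fin_num_measure.
Qed.

Variable f : T -> bool.
Hypothesis hf : measurable_fun setT f.

Let mg1 : measurable_fun setT (fun w : T * (bool * bool) => f w.1).
Proof. exact: measurableT_comp hf measurable_fst. Qed.
Let mg2 : measurable_fun setT (fun w : T * (bool * bool) => w.2.1).
Proof. exact: measurableT_comp measurable_fst measurable_snd. Qed.
Let mg3 : measurable_fun setT (fun w : T * (bool * bool) => w.2.2).
Proof. exact: measurableT_comp measurable_snd measurable_snd. Qed.

Definition mm t y z := mu [set w | (f @^-1` [set t]) w.1 /\ w.2.1 = y /\ w.2.2 = z].
Definition aa t y := mu [set w | (f @^-1` [set t]) w.1 /\ w.2.1 = y].
Definition nn y z := mu [set w : T * (bool * bool) | w.2.1 = y /\ w.2.2 = z].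
Definition pp y := mu [set w : T * (bool * bool) | w.2.1 = y].

Let m_mm t y z : measurable [set w : T * (bool * bool) | (f @^-1` [set t]) w.1 /\ w.2.1 = y /\ w.2.2 = z].
Proof. apply: measurableI. exact: (mpreT mg1 [set t]). apply: measurableI. exact: (mpreT mg2 [set y]). exact: (mpreT mg3 [set z]). Qed.
Let m_aa t y : measurable [set w : T * (bool * bool) | (f @^-1` [set t]) w.1 /\ w.2.1 = y].
Proof. exact: (measurableI _ _ (mpreT mg1 [set t]) (mpreT mg2 [set y])). Qed.
Let m_nn y z : measurable [set w : T * (bool * bool) | w.2.1 = y /\ w.2.2 = z].
Proof. exact: (measurableI _ _ (mpreT mg2 [set y]) (mpreT mg3 [set z])). Qed.
Let m_pp y : measurable [set w : T * (bool * bool) | w.2.1 = y].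
Proof. exact: (mpreT mg2 [set y]). Qed.

Ltac bsplit := move=> [? [[] []]] /=; rewrite /preimage /=; case: (f _); intuition (solve [auto | discriminate]).

Lemma pp_aa y : pp y = aa false y + aa true y.
Proof. case: y; (apply: msplit; [exact: m_aa | exact: m_aa | bsplit | bsplit]). Qed.

Lemma pp_nn y : pp y = nn y false + nn y true.
Proof. case: y; (apply: msplit; [exact: m_nn | exact: m_nn | bsplit | bsplit]). Qed.

Lemma pp_sum : pp true + pp false = 1.
Proof.
rewrite -[1]/(fine (1%:E)) -(probability_setT Q) -/(mu setT).
symmetry; apply: msplit; [exact: m_pp | exact: m_pp | bsplit | bsplit].
Qed.

Definition fm t := mu [set w : T * (bool * bool) | (f @^-1` [set t]) w.1].
Definition ym z := mu [set w : T * (bool * bool) | w.2.2 = z].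

Lemma fm_aa t : fm t = aa t true + aa t false.
Proof. case: t; (apply: msplit; [exact: m_aa | exact: m_aa | bsplit | bsplit]). Qed.
Lemma ym_nn z : ym z = nn true z + nn false z.
Proof. case: z; (apply: msplit; [exact: m_nn | exact: m_nn | bsplit | bsplit]). Qed.

Hypothesis hci : cond_indep Q.

Lemma ci t y z : mm t y z * pp y = aa t y * nn y z.
Proof.
have mA : measurable (f @^-1` [set t]).
  by rewrite -[X in measurable X]setTI; exact: hf.
have := hci _ y z mA.
rewrite (QE (m_mm t y z)) (QE (m_pp y)) (QE (m_aa t y)) (QE (m_nn y z)).
by rewrite -!EFinM => -[].
Qed.


Definition bb t z := mu [set w : T * (bool * bool) | (f @^-1` [set t]) w.1 /\ w.2.2 = z].
Let m_bb t z : measurable [set w : T * (bool * bool) | (f @^-1` [set t]) w.1 /\ w.2.2 = z].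
Proof. exact: (measurableI _ _ (mpreT mg1 [set t]) (mpreT mg3 [set z])). Qed.
Lemma bb_mm t z : bb t z = mm t true z + mm t false z.
Proof. case: t; case: z; (apply: msplit; [exact: m_mm | exact: m_mm | bsplit | bsplit]). Qed.

Let mh1 : measurable_fun setT (fun z : T * bool => f z.1).
Proof. exact: measurableT_comp hf measurable_fst. Qed.
Let mh2 : measurable_fun setT (fun z : T * bool => z.2).
Proof. exact: measurable_snd. Qed.

Definition Sn : set (T * bool) :=
  ([set z | f z.1 = true] `&` [set z | z.2 = false]) `|`
  ([set z | f z.1 = false] `&` [set z | z.2 = true]).

Let mSn : measurable Sn.
Proof.
apply: measurableU; apply: measurableI; solve [exact: (mpreT mh1 [set _]) | exact: (mpreT mh2 [set _])].
Qed.

Lemma nE (A : set (T * bool)) : noisyD Q A = Q (@noisy_pair d T @^-1` A).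
Proof. by []. Qed.

Lemma term1E : (\int[noisyD Q]_z (loss01 R (f z.1) z.2)%:E =
  (mm true true false + mm true false false + mm false true true + mm false false true)%:E)%E.
Proof.
have -> : (fun z => (loss01 R (f z.1) z.2)%:E) = (fun z => (\1_Sn z)%:E).
  apply/funext => -[x y]; rewrite indicE (@in_setb _ Sn (fun z : T * bool => f z.1 != z.2)) //.
  by move=> [x' y'] /=; rewrite /Sn /=; case: (f x'); case: y'; intuition (solve [auto | discriminate]).
rewrite integral_indic // setIT.
transitivity (Q (@noisy_pair d T @^-1` Sn)); first by [].
have mpS : measurable (@noisy_pair d T @^-1` Sn).
  by rewrite -[X in measurable X]setTI; exact: (@measurable_noisy_pair d T measurableT _ mSn).
rewrite (QE mpS); congr (_%:E).
rewrite (_ : mu _ = bb true false + bb false true); last first.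
  apply: msplit; [exact: m_bb | exact: m_bb | | bsplit].
  by move=> [? [[] []]] /=; rewrite /preimage /Sn /=; case: (f _); intuition (solve [auto | discriminate]).
by rewrite !bb_mm addrA.
Qed.


Let m_fm t : measurable [set w : T * (bool * bool) | (f @^-1` [set t]) w.1].
Proof. exact: (mpreT mg1 [set t]). Qed.
Let m_ym z : measurable [set w : T * (bool * bool) | w.2.2 = z].
Proof. exact: (mpreT mg3 [set z]). Qed.

Definition S2 : set ((T * bool) * (T * bool)) :=
  ([set z : T * bool | f z.1 = true] `*` [set z : T * bool | z.2 = false]) `|`
  ([set z : T * bool | f z.1 = false] `*` [set z : T * bool | z.2 = true]).

Let mF t : measurable [set z : T * bool | f z.1 = t].
Proof. exact: (mpreT mh1 [set t]). Qed.
Let mY t : measurable [set z : T * bool | z.2 = t].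
Proof. exact: (mpreT mh2 [set t]). Qed.

Lemma nF t : noisyD Q [set z : T * bool | f z.1 = t] = (fm t)%:E.
Proof.
transitivity (Q (@noisy_pair d T @^-1` [set z : T * bool | f z.1 = t])); first by [].
exact: (QE (m_fm t)).
Qed.
Lemma nY t : noisyD Q [set z : T * bool | z.2 = t] = (ym t)%:E.
Proof.
transitivity (Q (@noisy_pair d T @^-1` [set z : T * bool | z.2 = t])); first by [].
exact: (QE (m_ym t)).
Qed.

Lemma term2E : (\int[(noisyD Q \x noisyD Q)%E]_zz (loss01 R (f zz.1.1) zz.2.2)%:E =
  (fm true * ym false + fm false * ym true)%:E)%E.
Proof.
have -> : (fun zz : (T * bool) * (T * bool) => (loss01 R (f zz.1.1) zz.2.2)%:E) = (fun z => (\1_S2 z)%:E).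
  apply/funext => -[x y]; rewrite indicE (@in_setb _ S2 (fun z : (T * bool) * (T * bool) => f z.1.1 != z.2.2)) //.
  by move=> [[x' y'] [x'' y'']] /=; rewrite /S2 /=; case: (f x'); case: y''; intuition (solve [auto | discriminate]).
rewrite integral_indic; last by apply: measurableU; apply: measurableX.
rewrite setIT /S2 measureU; last 3 first.
- by apply: measurableX.
- by apply: measurableX.
- apply/seteqP; split => -[[x y] [x' y']] //= [[h1 h2] [h3 h4]].
  by rewrite /= in h1 h3; rewrite h1 in h3.
transitivity (noisyD Q [set z : T * bool | f z.1 = true] * noisyD Q [set z : T * bool | z.2 = false] +
  noisyD Q [set z : T * bool | f z.1 = false] * noisyD Q [set z : T * bool | z.2 = true])%E.
  by congr (_ + _)%E; exact: product_measure1E.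
by rewrite !nF !nY -!EFinM -EFinD.
exact: measurableT.
Qed.


Lemma cleanE : clean_risk Q f = (aa true false + aa false true)%:E.
Proof.
rewrite /clean_risk (_ : cleanD Q _ = Q (@clean_pair d T @^-1` [set z : T * bool | f z.1 != z.2])) //.
have -> : @clean_pair d T @^-1` [set z : T * bool | f z.1 != z.2] =
  [set w : T * (bool * bool) | (f @^-1` [set true]) w.1 /\ w.2.1 = false] `|`
  [set w : T * (bool * bool) | (f @^-1` [set false]) w.1 /\ w.2.1 = true].
  apply/seteqP; split => -[x [y z]] /=; rewrite /preimage /=; case: (f x); case: y; intuition (solve [auto | discriminate]).
rewrite QE; last by apply: measurableU.
congr (_%:E); apply: msplit; [exact: m_aa | exact: m_aa | bsplit | bsplit].
Qed.

Lemma peerE (hpt : pp true = 2^-1) : peer_risk Q f =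
  ((1 - e_minus Q - e_plus Q) * (aa true false + aa false true - 2^-1))%:E.
Proof.
rewrite /peer_risk term1E term2E -EFinB; congr (_%:E).
have pf : pp false = 2^-1 by have := pp_sum; rewrite hpt => h; lra.
have eP : e_plus Q = nn true false / pp true by [].
have eM : e_minus Q = nn false true / pp false by [].
have mE t y z : mm t y z = 2 * aa t y * nn y z.
  have := ci t y z; rewrite (_ : pp y = 2^-1); last by case: y.
  move=> h; rewrite -mulrA -h; lra.
have a0 y : aa false y = pp y - aa true y by rewrite (pp_aa y); ring.
rewrite eP eM !mE !fm_aa !ym_nn (a0 true) (a0 false).
rewrite (_ : nn true true = pp true - nn true false); last by rewrite (pp_nn true); ring.
rewrite (_ : nn false false = pp false - nn false true); last by rewrite (pp_nn false); ring.
by rewrite hpt pf; field.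
Qed.

End S.

Theorem theorem2 (R : realType) (d : measure_display) (T : measurableType d)
  (Q : probability (T * (bool * bool))%type R)
  (hci : cond_indep Q)
  (hp : prob_pos Q = (2^-1)%:E)
  (he : e_minus Q + e_plus Q < 1)
  (F : set (T -> bool))
  (hF : forall f, F f -> measurable_fun setT f)
  (fstar : T -> bool) (hfs : F fstar)
  (hmin : forall f, F f -> (peer_risk Q fstar <= peer_risk Q f)%E) :
  forall f, F f -> (clean_risk Q fstar <= clean_risk Q f)%E.
Proof.
move=> f Ff.
have hpt : @pp R d T Q true = 2^-1.
  move: hp; rewrite /prob_pos (@QE R d T Q [set w : T * (bool * bool) | w.2.1 = true]).
    by move=> [].
  exact: (mpreT (measurableT_comp measurable_fst measurable_snd) [set true]).
have := hmin f Ff.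
rewrite (@peerE R d T Q fstar (hF _ hfs) hci hpt) (@peerE R d T Q f (hF _ Ff) hci hpt) lee_fin.
have hk : 0 < 1 - e_minus Q - e_plus Q by lra.
rewrite ler_pM2l // lerD2r => H.
by rewrite (@cleanE R d T Q fstar (hF _ hfs)) (@cleanE R d T Q f (hF _ Ff)) lee_fin.
Qed.
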